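(* Let $\pi$ be an $r$-homogeneous strongly log-concave distribution with associated matroid $\mathcal{M}=(E,\mathcal{I})$ and weight function $w$. If $I\in\mathcal{I}$ and $|I|\le r-2$, then the matrix $W_I$ has at most one positive eigenvalue.
   Context: $\pi:2^{[n]}\to\mathbb{R}_{\ge0}$ has generating polynomial $g_\pi(x)=\sum_S\pi(S)\prod_{i\in S}x_i$; it is $r$-homogeneous if its support consists of $r$-sets; a polynomial with nonnegative coefficients is strongly log-concave if for every $J\subseteq[n]$, $\partial_J p$ has negative semidefinite $\nabla^2\log(\partial_J p)$ at the all-ones vector; $\pi$ is strongly log-concave if $g_\pi$ is. It is known that the support $\mathcal{B}$ of such $\pi$ is the set of bases of a matroid $\mathcal{M}=(E,\mathcal{I})$ of rank $r$ on $E=[n]$ ($\mathcal{I}$ = subsets of bases). Fix a constant $Z_r>0$ and define weights on $\mathcal{I}$ by $w(B)=\pi(B)Z_r$ for $B\in\mathcal{B}$ and $w(I)=\sum_{I'\supset I,\ |I'|=|I|+1,\ I'\in\mathcal{I}}w(I')$ for $|I|<r$; equivalently $w(I)=(r-|I|)!\sum_{B\in\mathcal{B},B\supseteq I}w(B)$, with $w(I)=0$ for dependent $I$. For $I\in\mathcal{I}$ with $|I|\le r-2$, $W_I$ is the matrix indexed by $E\setminus I$ with $(W_I)_{uv}=w(I\cup\{u,v\})$ for $u\ne v$ and $(W_I)_{uu}=0$; equivalently $W_I=(r-|I|-2)!\,Z_r\,\nabla^2\partial_I g_\pi(\mathbf{1})$. *)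

(* Defs.v *)
From HB Require Import structures.
From mathcomp Require Import all_boot all_order all_algebra.
From mathcomp Require Import mpoly.
Set Implicit Arguments. Unset Strict Implicit. Unset Printing Implicit Defensive.
Import Order.TTheory GRing.Theory Num.Theory.
Local Open Scope ring_scope.

Section Defs.
Variables (R : realFieldType) (n : nat).

Definition genpoly (pi : {set 'I_n} -> R) : {mpoly R[n]} :=
  \sum_(S : {set 'I_n}) pi S *: \prod_(i in S) 'X_i.

Definition homogeneous_dist (r : nat) (pi : {set 'I_n} -> R) : Prop :=
  forall S, pi S != 0 -> #|S| = r.

Definition partialJ (J : {set 'I_n}) (p : {mpoly R[n]}) : {mpoly R[n]} :=
  foldr (@mderiv n R) p (enum J).

Definition ones : 'I_n -> R := fun _ => 1.

Definition hess_log_at1 (q : {mpoly R[n]}) : 'M[R]_n :=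
  \matrix_(i, j)
    ((q.@[ones] * (mderiv i (mderiv j q)).@[ones]
      - (mderiv i q).@[ones] * (mderiv j q).@[ones]) / (q.@[ones]) ^+ 2).

Definition nsd (m : nat) (A : 'M[R]_m) : Prop :=
  forall v : 'rV[R]_m, (v *m A *m v^T) 0 0 <= 0.

Definition strongly_log_concave (p : {mpoly R[n]}) : Prop :=
  (forall m, 0 <= p@_m) /\
  forall J : {set 'I_n}, nsd (hess_log_at1 (partialJ J p)).

Definition SLC_dist (pi : {set 'I_n} -> R) : Prop :=
  strongly_log_concave (genpoly pi).

Definition is_basis (pi : {set 'I_n} -> R) (B : {set 'I_n}) : bool := pi B != 0.
Definition independent (pi : {set 'I_n} -> R) (I : {set 'I_n}) : Prop :=
  exists2 B, is_basis pi B & I \subset B.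

Definition weight (pi : {set 'I_n} -> R) (r : nat) (Zr : R) (I : {set 'I_n}) : R :=
  (r - #|I|)`!%:R * \sum_(B : {set 'I_n} | is_basis pi B && (I \subset B)) pi B * Zr.

(* W_I, indexed by E \ I (enumerated via enum_val) *)
Definition W_mat (pi : {set 'I_n} -> R) (r : nat) (Zr : R) (I : {set 'I_n})
  : 'M[R]_#|~: I| :=
  \matrix_(u, v)
    (if u == v then 0
     else weight pi r Zr (I :|: [set @enum_val _ (mem (~: I)) u;
                                     @enum_val _ (mem (~: I)) v])).

Definition at_most_pos_eigs (m : nat) (A : 'M[R]_m) (k : nat) : Prop :=
  forall s : seq R, uniq s -> all (fun a => 0 < a) s ->
    (\sum_(a <- s) mup a (char_poly A) <= k)%N.

End Defs.

(* Main.v *)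
Require Import Defs.
From HB Require Import structures.
From mathcomp Require Import all_boot all_order all_algebra.
From mathcomp Require Import mpoly.
From mathcomp Require Import ring lra.
Import Order.TTheory GRing.Theory Num.Theory.
Set Implicit Arguments. Unset Strict Implicit. Unset Printing Implicit Defensive.
Local Open Scope ring_scope.

Section MP.
Variables (R : realFieldType) (n : nat).
Definition mS (S : {set 'I_n}) : {mpoly R[n]} := \prod_(k in S) 'X_k.

Lemma mderivXU (i k : 'I_n) : mderiv i ('X_k : {mpoly R[n]}) = (k == i)%:R.
Proof.
rewrite mderivX mnm1E; case: eqP => [->|_]; last by rewrite scale0r.
rewrite scale1r (_ : (U_(i) - U_(i))%MM = 0%MM) ?mpolyX0 //.
by apply/mnmP=> l; rewrite !mnmE subnn.
Qed.

Lemma mderiv_mS_out (i : 'I_n) (S : {set 'I_n}) : i \notin S -> mderiv i (mS S) = 0.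
Proof.
move=> iS; rewrite /mS; apply: (big_ind (fun p => mderiv i p = 0)).
- by rewrite -mpolyC1 mderivC.
- by move=> x y hx hy; rewrite mderivM hx hy mul0r mulr0 addr0.
move=> k kS; rewrite mderivXU; case: eqP => // ek; subst.
by rewrite kS in iS.
Qed.

Lemma mderiv_mS (i : 'I_n) (S : {set 'I_n}) : mderiv i (mS S) = if i \in S then mS (S :\ i) else 0.
Proof.
case: ifP => iS; last by apply: mderiv_mS_out; rewrite iS.
rewrite /mS (bigD1 i iS) /= mderivM mderivXU eqxx mul1r.
rewrite (_ : mderiv i _ = 0) ?mulr0 ?addr0.
  by apply: eq_bigl => k; rewrite in_setD1 andbC.
have := @mderiv_mS_out i (S :\ i); rewrite /mS.
rewrite (eq_bigl (fun k => (k \in S) && (k != i))); last first.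
  by move=> k; rewrite in_setD1 andbC.
by apply; rewrite setD11.
Qed.

Lemma meval_mS (S : {set 'I_n}) : (mS S).@[@ones R n] = 1.
Proof.
rewrite /mS rmorph_prod /=; apply: big1 => k _; by rewrite mevalXU.
Qed.
End MP.

Section MP2.
Variables (R : realFieldType) (n : nat).
Local Notation mS := (@mS R n).

Lemma foldr_mS (s : seq 'I_n) (S : {set 'I_n}) : uniq s ->
  foldr (@mderiv n R) (mS S) s =
  if all (mem S) s then mS (S :\: [set x in s]) else 0.
Proof.
elim: s => [|x s IH] /=.
  by move=> _; congr mS; apply/setP => k; rewrite !inE; case: (k \in S).
case/andP => xs us; rewrite IH //.
case: (boolP (all _ s)) => As; last by rewrite andbF linear0.
rewrite mderiv_mS !inE.
case: (boolP (x \in S)) => xS /=; last by rewrite andbF.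
rewrite xs andbT.
rewrite /mS; apply: eq_bigl => k; rewrite !inE.
case: (eqVneq k x) => [->|] //=; by rewrite (negbTE xs).
Qed.

Lemma foldr_lin (s : seq 'I_n) (T : finType) (c : T -> R) (f : T -> {mpoly R[n]}) :
  foldr (@mderiv n R) (\sum_t c t *: f t) s =
  \sum_t c t *: foldr (@mderiv n R) (f t) s.
Proof.
elim: s => [|x s IH] //=; rewrite IH linear_sum; apply: eq_bigr => t _.
by rewrite linearZ.
Qed.

Definition qI (pi : {set 'I_n} -> R) (I : {set 'I_n}) : {mpoly R[n]} :=
  \sum_(S : {set 'I_n}) (if I \subset S then pi S else 0) *: mS (S :\: I).

Lemma partialJ_gen (pi : {set 'I_n} -> R) (I : {set 'I_n}) :
  partialJ I (genpoly pi) = qI pi I.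
Proof.
rewrite /partialJ /genpoly foldr_lin /qI; apply: eq_bigr => S _.
rewrite foldr_mS ?enum_uniq // set_enum.
have -> : all (mem S) (enum I) = (I \subset S).
  apply/allP/subsetP => h x; first by move=> xI; apply: h; rewrite mem_enum.
  by rewrite mem_enum => /h.
by case: ifP => _; rewrite ?scaler0 ?scale0r.
Qed.

Lemma qI_eval pi I : (qI pi I).@[@ones R n] =
  \sum_(S : {set 'I_n}) (if I \subset S then pi S else 0).
Proof.
rewrite /qI raddf_sum; apply: eq_bigr => S _ /=.
by rewrite mevalZ meval_mS mulr1.
Qed.

Lemma qI_d2 pi I (i j : 'I_n) :
  (mderiv i (mderiv j (qI pi I))).@[@ones R n] =
  \sum_(S : {set 'I_n}) (if [&& I \subset S, j \in S :\: I & i \in (S :\: I) :\ j] then pi S else 0).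
Proof.
rewrite /qI [mderiv j _]linear_sum [mderiv i _]linear_sum raddf_sum; apply: eq_bigr => S _.
rewrite !linearZ /= mderiv_mS.
rewrite mevalZ; case: (boolP (j \in S :\: I)) => jS /=; last first.
  by rewrite mderiv0 meval0 mulr0 andbF; case: (I \subset S).
rewrite mderiv_mS; case: (boolP (i \in _)) => iS; last first.
  by rewrite meval0 mulr0 !andbF; case: (I \subset S).
rewrite meval_mS mulr1 andbT.
by [].
Qed.
End MP2.


Section LA.
Variable R : realFieldType.

Lemma char_poly_sim m (P Pi A : 'M[R]_m) : P *m Pi = 1%:M ->
  char_poly (P *m A *m Pi) = char_poly A.
Proof.
move=> hP; rewrite /char_poly /char_poly_mx.
have e : 'X%:M - map_mx polyC (P *m A *m Pi) =
   map_mx polyC P *m ('X%:M - map_mx polyC A) *m map_mx polyC Pi.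
  rewrite !map_mxM mulmxBr mulmxBl mul_mx_scalar -scalemxAl -mul_mx_scalar.
  have -> : map_mx polyC P *m map_mx polyC Pi = 1%:M by rewrite -map_mxM hP map_mx1.
  by rewrite mul1mx.
rewrite e !det_mulmx !det_map_mx mulrC mulrA -rmorphM -det_mulmx.
have -> : Pi *m P = 1%:M.
  exact: mulmx1C.
by rewrite det1 mul1r.
Qed.

Lemma char_poly_row m (M : 'M[R]_m.+1) j a :
  (forall k, M j k = if k == j then a else 0) ->
  char_poly M = ('X - a%:P) * char_poly (row' j (col' j M)).
Proof.
move=> hM; rewrite /char_poly (expand_det_row _ j) (bigD1 j) //= big1 ?addr0.
  rewrite /cofactor addnn -mul2n exprM sqrrN expr1n expr1n mul1r row'_col'_char_poly_mx.
  by rewrite !mxE eqxx hM eqxx mulr1n.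
move=> k kj; rewrite !mxE hM (negbTE kj) eq_sym (negbTE kj) mulr0n subr0.
by rewrite mul0r.
Qed.

Definition dot m (u v : 'rV[R]_m) : R := (u *m v^T) 0 0.

Lemma dotE m (u v : 'rV[R]_m) : dot u v = \sum_i u 0 i * v 0 i.
Proof. by rewrite /dot mxE; apply: eq_bigr => i _; rewrite mxE. Qed.

Lemma dotC m (u v : 'rV[R]_m) : dot u v = dot v u.
Proof. by rewrite !dotE; apply: eq_bigr => i _; rewrite mulrC. Qed.

Lemma dotDl m (u v w : 'rV[R]_m) : dot (u + v) w = dot u w + dot v w.
Proof. by rewrite !dotE -big_split; apply: eq_bigr => i _; rewrite mxE mulrDl. Qed.

Lemma dotZl m k (u w : 'rV[R]_m) : dot (k *: u) w = k * dot u w.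
Proof. by rewrite !dotE mulr_sumr; apply: eq_bigr => i _; rewrite mxE mulrA. Qed.

Lemma dotNl m (u w : 'rV[R]_m) : dot (- u) w = - dot u w.
Proof. by rewrite -scaleN1r dotZl mulN1r. Qed.

Lemma dotBl m (u v w : 'rV[R]_m) : dot (u - v) w = dot u w - dot v w.
Proof. by rewrite dotDl dotNl. Qed.

Lemma dotDr m (u v w : 'rV[R]_m) : dot w (u + v) = dot w u + dot w v.
Proof. by rewrite !(dotC w) dotDl. Qed.
Lemma dotZr m k (u w : 'rV[R]_m) : dot w (k *: u) = k * dot w u.
Proof. by rewrite !(dotC w) dotZl. Qed.
Lemma dotBr m (u v w : 'rV[R]_m) : dot w (u - v) = dot w u - dot w v.
Proof. by rewrite !(dotC w) dotBl. Qed.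

Lemma dot_ge0 m (u : 'rV[R]_m) : 0 <= dot u u.
Proof. by rewrite dotE; apply: sumr_ge0 => i _; rewrite -expr2 sqr_ge0. Qed.

Lemma dot_eq0 m (u : 'rV[R]_m) : dot u u = 0 -> u = 0.
Proof.
rewrite dotE => /eqP; rewrite psumr_eq0; last by move=> i _; rewrite -expr2 sqr_ge0.
move/allP => h; apply/rowP => i; rewrite mxE.
by have := h i (mem_index_enum i); rewrite -expr2 sqrf_eq0 => /eqP.
Qed.

Lemma dotA m (A : 'M[R]_m) (u v : 'rV[R]_m) : A^T = A ->
  dot (u *m A) v = dot u (v *m A).
Proof. by move=> sA; rewrite /dot trmx_mul sA mulmxA. Qed.

Section Hyp.
Variables (m : nat) (A : 'M[R]_m) (c : 'rV[R]_m).
Hypothesis symA : A^T = A.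
Hypothesis hc : forall v, dot v c = 0 -> dot (v *m A) v <= 0.

Lemma no_pos_perp u a : 0 < a -> u *m A = a *: u -> dot u c = 0 -> u = 0.
Proof.
move=> a0 hu uc; have := hc uc; rewrite hu dotZl => h.
apply: dot_eq0; have := dot_ge0 u; rewrite pmulr_rle0 // in h; lra.
Qed.

Lemma eig_dep u y a : 0 < a -> u *m A = a *: u -> y *m A = a *: y -> u != 0 ->
  y = (dot y c / dot u c) *: u.
Proof.
move=> a0 hu hy u0.
have uc : dot u c != 0 by apply: contra u0 => /eqP /(no_pos_perp a0 hu) ->.
set x0 := dot y c *: u - dot u c *: y.
have hx : x0 *m A = a *: x0.
  rewrite /x0 mulmxBl -!scalemxAl hu hy !scalerA scalerBr !scalerA. by rewrite (mulrC a) (mulrC a).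
have xc : dot x0 c = 0 by rewrite /x0 dotBl !dotZl mulrC subrr.
have := no_pos_perp a0 hx xc; rewrite /x0 => /eqP; rewrite subr_eq0 => /eqP e.
by rewrite mulrC -scalerA e scalerA mulVf // scale1r.
Qed.

Lemma two_eig (u v : 'rV[R]_m) a b : 0 < a -> 0 < b -> a != b ->
  u *m A = a *: u -> v *m A = b *: v -> u != 0 -> v != 0 -> False.
Proof.
move=> a0 b0 ab hu hv u0 v0.
have duv : dot u v = 0.
  have : a * dot u v = b * dot u v by rewrite -dotZl -hu dotA // hv dotZr.
  move/eqP; rewrite -subr_eq0 -mulrBl mulf_eq0 subr_eq0 (negbTE ab) /=. by move/eqP.
have uc : dot u c != 0 by apply: contra u0 => /eqP /(no_pos_perp a0 hu) ->.
set x := dot v c *: u - dot u c *: v.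
have xc : dot x c = 0 by rewrite /x dotBl !dotZl mulrC subrr.
have := hc xc; rewrite /x mulmxBl -!scalemxAl hu hv !scalerA.
rewrite !(dotBl, dotBr, dotZl, dotZr) duv (dotC v u) duv.
have pu : 0 < dot u u by rewrite lt_def dot_ge0 andbT; apply: contra u0 => /eqP/dot_eq0 ->.
have pv : 0 < dot v v by rewrite lt_def dot_ge0 andbT; apply: contra v0 => /eqP/dot_eq0 ->.
set al := dot v c; set be := dot u c.
have : 0 < be * be by rewrite -expr2 lt_def sqr_ge0 andbT sqrf_eq0.
move=> bb.
have h1 : 0 <= al * al * a * dot u u.
  by rewrite mulr_ge0 ?(ltW pu) // mulr_ge0 ?(ltW a0) // -expr2 sqr_ge0.
have h2 : 0 < be * be * b * dot v v by rewrite mulr_gt0 // mulr_gt0.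
rewrite !mulr0 !subr0 sub0r opprK. nra.
Qed.
End Hyp.

Lemma double_root m (A : 'M[R]_m.+1) (c : 'rV[R]_m.+1) a :
  A^T = A -> (forall v, dot v c = 0 -> dot (v *m A) v <= 0) -> 0 < a ->
  (('X - a%:P) ^+ 2 %| char_poly A) -> False.
Proof.
move=> symA hc a0 hdvd.
have : root (char_poly A) a.
  rewrite -dvdp_XsubCl; apply: dvdp_trans hdvd; by rewrite expr2 dvdp_mulIl.
rewrite -eigenvalue_root_char => /eigenvalueP [u0 hu0 u0nz].
have [j uj] : exists j, u0 0 j != 0.
  apply/existsP; apply: contraR u0nz => /existsPn h; apply/eqP/rowP => k.
  by rewrite mxE; apply/eqP; move: (h k); rewrite negbK.
set u := (u0 0 j)^-1 *: u0.
have hu : u *m A = a *: u by rewrite /u -scalemxAl hu0 !scalerA mulrC.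
have u1 : u 0 j = 1 by rewrite /u mxE mulVf.
have unz : u != 0.
  by apply/eqP => e; move: u1; rewrite e mxE => /eqP; rewrite eq_sym oner_eq0.
set ej : 'rV[R]_m.+1 := delta_mx 0 j.
set D := u - ej.
set E := ej^T *m D.
have Dej : D *m ej^T = 0.
  apply/rowP => k; rewrite ord1 [RHS]mxE -/(dot D ej) dotE (bigD1 j) //= big1 ?addr0.
    by rewrite !mxE !eqxx mulVf // subrr mul0r.
  by move=> i ij; rewrite [ej 0 i]mxE (negbTE ij) andbF mulr0.
have ejej : ej *m ej^T = 1%:M.
  apply/rowP => k; rewrite ord1 [RHS]mxE -/(dot ej ej) dotE (bigD1 j) //= big1 ?addr0.
    by rewrite !mxE !eqxx mulr1n mulr1.
  by move=> i ij; rewrite [ej 0 i]mxE (negbTE ij) andbF mulr0.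
have EE : E *m E = 0 by rewrite /E mulmxA -(mulmxA _ D) Dej mulmx0 mul0mx.
set P : 'M[R]_m.+1 := 1%:M + E.
set Pi : 'M[R]_m.+1 := 1%:M - E.
have PPi : P *m Pi = 1%:M.
  rewrite /P /Pi mulmxDl !mul1mx mulmxBr mulmx1 EE subr0. by rewrite subrK.
have PiP : Pi *m P = 1%:M := mulmx1C PPi.
have ejP : ej *m P = u by rewrite /P mulmxDr mulmx1 /E mulmxA ejej mul1mx /D addrC subrK.
have uPi : u *m Pi = ej by rewrite -ejP -mulmxA PPi mulmx1.
set M := P *m A *m Pi.
have ejM : ej *m M = a *: ej by rewrite /M !mulmxA ejP hu -scalemxAl uPi.
have hM : forall k, M j k = if k == j then a else 0.
  move=> k; have := congr1 (fun X : 'rV_m.+1 => X 0 k) ejM.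
  by rewrite -rowE !mxE eqxx /= eq_sym => ->; case: (j == k); rewrite ?mulr1 ?mulr0.
have cpA : char_poly A = ('X - a%:P) * char_poly (row' j (col' j M)).
  by rewrite -(char_poly_row hM) /M char_poly_sim.
set B := row' j (col' j M).
have : root (char_poly B) a.
  move: hdvd; rewrite cpA expr2 dvdp_mul2l ?polyXsubC_eq0 // dvdp_XsubCl //.
rewrite -eigenvalue_root_char => /eigenvalueP [w hw wnz].
set x : 'rV[R]_m.+1 := \row_i (if unlift j i is Some k then w 0 k else 0).
have xj : x 0 j = 0 by rewrite mxE unlift_none.
have xl : forall l, x 0 (lift j l) = w 0 l by move=> l; rewrite mxE liftK.
set z := x *m M - a *: x.
have zl : forall l, z 0 (lift j l) = 0.
  move=> l; rewrite /z !mxE (bigD1_ord j) //= xj mul0r add0r.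
  have := congr1 (fun X : 'rV_m => X 0 l) hw; rewrite /= !mxE. rewrite liftK => <-.
  apply/eqP; rewrite subr_eq0; apply/eqP; apply: eq_bigr => k _.
  by rewrite xl !mxE.
have ze : z = z 0 j *: ej.
  apply/rowP => k; rewrite [RHS]mxE [ej 0 k]mxE; case: (unliftP j k) => [l ->|->].
    by rewrite zl eq_sym (negbTE (neq_lift _ _)) andbF mulr0.
  by rewrite !eqxx mulr1.
set y := x *m P.
have MP : M *m P = P *m A by rewrite /M -mulmxA PiP mulmx1.
have yA : y *m A = a *: y + z 0 j *: u.
  rewrite /y -mulmxA -MP mulmxA.
  have -> : x *m M = z + a *: x by rewrite /z subrK.
  by rewrite mulmxDl {1}ze -!scalemxAl ejP addrC.
set g := y *m A - a *: y.
have gu : g = z 0 j *: u by rewrite /g yA addrC addKr.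
have gA : g *m A = a *: g.
  rewrite gu -scalemxAl hu !scalerA. by rewrite [_ * a]mulrC.
have g0 : g = 0.
  apply: dot_eq0; rewrite {1}/g dotBl dotA // gA dotZr dotZl subrr //.
have hy : y *m A = a *: y by apply/eqP; rewrite -subr_eq0 -/g g0.
have ey := eig_dep hc a0 hu hy unz.
have : x = (dot y c / dot u c) *: ej.
  have -> : x = y *m Pi by rewrite /y -mulmxA PPi mulmx1.
  by rewrite {1}ey -scalemxAl uPi.
set lam := dot y c / dot u c => ex.
have lam0 : lam = 0.
  by move: xj; rewrite ex !mxE !eqxx /= mulr1.
move: wnz; rewrite (_ : w = 0) ?eqxx //; apply/rowP => l.
by rewrite -xl ex lam0 scale0r !mxE.
Qed.

Lemma LA_main m (A : 'M[R]_m) (c : 'rV[R]_m) :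
  A^T = A -> (forall v, dot v c = 0 -> dot (v *m A) v <= 0) ->
  forall s : seq R, uniq s -> all (fun a => 0 < a) s ->
    (\sum_(a <- s) mup a (char_poly A) <= 1)%N.
Proof.
case: m A c => [|m] A c symA hc s us ps.
  rewrite big1_seq // => a _; apply: mupNroot.
  by rewrite /char_poly det_mx00 root1.
have pnz : char_poly A != 0 by apply: monic_neq0; apply: char_poly_monic.
have F1 : forall a, 0 < a -> (mup a (char_poly A) <= 1)%N.
  move=> a a0; rewrite -ltnS mup_ltn //. apply/negP => h.
  exact: (double_root symA hc a0 h).
have F2 : forall a b, 0 < a -> 0 < b -> a != b ->
    (0 < mup a (char_poly A))%N -> (0 < mup b (char_poly A))%N -> False.
  move=> a b a0 b0 ab; rewrite -!XsubC_dvd // !dvdp_XsubCl.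
  rewrite -!eigenvalue_root_char => /eigenvalueP [u hu u0] /eigenvalueP [v hv v0].
  exact: (two_eig symA hc a0 b0 ab hu hv u0 v0).
elim: s us ps => [|x s IH] /=; first by rewrite big_nil.
case/andP => xs us /andP [x0 ps]; rewrite big_cons.
case: (posnP (mup x (char_poly A))) => [->|mx]; first by rewrite add0n IH.
rewrite big1_seq ?addn0 ?F1 // => b /andP [_ bs].
apply/eqP; rewrite -leqn0 leqNgt; apply/negP => mb.
have b0 : 0 < b by move/allP: ps => /(_ b bs).
have xb : x != b by apply: contraNneq xs => ->.
exact: (F2 x b x0 b0 xb mx mb).
Qed.
End LA.


Section Red.
Variables (R : realFieldType) (n : nat).

Definition evI (I : {set 'I_n}) (k : 'I_#|~: I|) : 'I_n := @enum_val _ (mem (~: I)) k.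

Lemma qf_split m (v : 'I_m -> R) (a : 'I_m -> 'I_m -> R) (b : 'I_m -> R) :
  \sum_l (\sum_k v k * (a k l - b k * b l)) * v l =
  \sum_l (\sum_k v k * a k l) * v l - (\sum_k v k * b k) * (\sum_l b l * v l).
Proof.
rewrite [in RHS]mulr_sumr -sumrB; apply: eq_bigr => l _.
rewrite !mulr_suml -sumrB; apply: eq_bigr => k _.
rewrite mulrBr mulrBl; congr (_ - _); by rewrite !mulrA [_ * b l]mulrC !mulrA.
Qed.

Lemma sumV (I : {set 'I_n}) (v : 'rV[R]_#|~: I|) (f : 'I_n -> R) :
  \sum_i (\sum_k v 0 k * (evI k == i)%:R) * f i = \sum_k v 0 k * f (evI k).
Proof.
under eq_bigr do rewrite mulr_suml.
rewrite exchange_big /=; apply: eq_bigr => k _.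
rewrite (bigD1 (evI k)) //= eqxx mulr1 big1 ?addr0 // => i ik.
by rewrite eq_sym (negbTE ik) mulr0 mul0r.
Qed.

Lemma weight_ab (pi : {set 'I_n} -> R) r Zr (I : {set 'I_n}) (a b : 'I_n) :
  a \notin I -> b \notin I -> a != b ->
  weight pi r Zr (I :|: [set a; b]) =
  ((r - #|I| - 2)`!%:R * Zr) *
  \sum_(S : {set 'I_n})
     (if [&& I \subset S, b \in S :\: I & a \in (S :\: I) :\ b] then pi S else 0).
Proof.
move=> aI bI ab; rewrite /weight.
have -> : #|I :|: [set a; b]| = (#|I| + 2)%N.
  rewrite cardsU cards2 ab.
  have -> : I :&: [set a; b] = set0.
    apply/setP => k; rewrite !inE; case: (boolP (k \in I)) => //= kI.
    by apply/negP => /orP [] /eqP ek; subst; rewrite kI in aI bI.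
  by rewrite cards0 subn0.
rewrite subnDA -mulrA; congr (_ * _).
rewrite big_mkcond mulr_sumr; apply: eq_bigr => S _.
have -> : (I :|: [set a; b] \subset S) =
          [&& I \subset S, b \in S :\: I & a \in (S :\: I) :\ b].
  rewrite !subUset !sub1set !inE aI bI ab /=.
  by case: (I \subset S); case: (a \in S); case: (b \in S).
rewrite /is_basis; case: (eqVneq (pi S) 0) => [->|pS]; first by rewrite !if_same mul0r mulr0.
rewrite /=; case: ifP => _; by rewrite ?mulr0 // mulrC.
Qed.

Lemma H_diag (pi : {set 'I_n} -> R) (I : {set 'I_n}) i :
  (mderiv i (mderiv i (qI pi I))).@[@ones R n] = 0.
Proof. by rewrite qI_d2 big1 // => S _; rewrite !inE eqxx !andbF. Qed.

End Red.

Unset Implicit Arguments.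

Theorem proposition2p3 (R : realFieldType) (n r : nat)
    (pi : {set 'I_n} -> R) (Zr : R) (I : {set 'I_n}) :
  (forall S, 0 <= pi S) ->
  homogeneous_dist r pi ->
  SLC_dist pi ->
  0 < Zr ->
  independent pi I ->
  (#|I| + 2 <= r)%N ->
  at_most_pos_eigs (W_mat pi r Zr I) 1.
Proof.
move=> pi0 _ [_ slc] Zr0 _ _.
have hn := slc I; rewrite partialJ_gen in hn.
set q := qI pi I in hn.
set Q := q.@[@ones R n].
set G := fun i => (mderiv i q).@[@ones R n].
set H := fun i j => (mderiv i (mderiv j q)).@[@ones R n].
set K := ((r - #|I| - 2)`!%:R * Zr).
have K0 : 0 <= K by rewrite mulr_ge0 // ltW.
have WE : forall k l, W_mat pi r Zr I k l = K * H (evI k) (evI l).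
  move=> k l; rewrite mxE; case: (eqVneq k l) => [->|kl].
    by rewrite /H H_diag mulr0.
  rewrite weight_ab //.
  - by rewrite /H /q qI_d2.
  - by have := enum_valP k; rewrite inE.
  - by have := enum_valP l; rewrite inE.
  - by apply: contra kl => /eqP /enum_val_inj ->.
set c : 'rV[R]_#|~: I| := \row_k G (evI k).
move=> s us ps; apply: (@LA_main R _ _ c _ _ s us ps).
  apply/matrixP => k l; rewrite mxE !WE.
  by rewrite /H mderiv_comm.
move=> v vc.
have dE : dot (v *m W_mat pi r Zr I) v =
    K * \sum_l (\sum_k v 0 k * H (evI k) (evI l)) * v 0 l.
  rewrite dotE mulr_sumr; apply: eq_bigr => l _; rewrite mxE mulrA; congr (_ * _).
  rewrite mulr_sumr; apply: eq_bigr => k _; by rewrite WE mulrCA.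
rewrite dE; apply: mulr_ge0_le0 K0 _.
have QE : Q = \sum_(S : {set 'I_n}) (if I \subset S then pi S else 0) by rewrite /Q qI_eval.
have Qge0 : 0 <= Q by rewrite QE; apply: sumr_ge0 => S _; case: ifP.
case: (eqVneq Q 0) => [Q0|Qn0].
  have H0 : forall i j, H i j = 0.
    move=> i j; rewrite /H /q qI_d2; apply: big1 => S _.
    case: ifP => // /andP [IS _].
    move: Q0; rewrite QE => /eqP; rewrite psumr_eq0; last by move=> S' _; case: ifP.
    by move/allP => /(_ S (mem_index_enum S)); rewrite IS => /eqP.
  by rewrite big1 // => l _; rewrite big1 ?mul0r // => k _; rewrite H0 mulr0.
have Qgt0 : 0 < Q by rewrite lt_def Qn0.
set V : 'rV[R]_n := \row_i \sum_k v 0 k * (evI k == i)%:R.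
have hsE : forall i j, hess_log_at1 q i j = Q^-1 * H i j - (Q^-1 * G i) * (Q^-1 * G j).
  move=> i j; rewrite mxE -/Q -/(G i) -/(G j) -/(H i j).
  by field; rewrite Qn0.
have key : (V *m hess_log_at1 q *m V^T) 0 0 =
    Q^-1 * \sum_l (\sum_k v 0 k * H (evI k) (evI l)) * v 0 l.
  rewrite mxE.
  under eq_bigr do rewrite mxE.
  under eq_bigr => j _ do under eq_bigr => i _ do rewrite mxE hsE.
  under eq_bigr => j _ do rewrite sumV mulrC mxE.
  rewrite /V; under eq_bigr => j _ do rewrite mxE.
  rewrite sumV.
  under eq_bigr => l _ do rewrite mulrC.
  rewrite (qf_split (fun k => v 0 k) (fun k l => Q^-1 * H (evI k) (evI l))
                    (fun k => Q^-1 * G (evI k))).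
  have -> : \sum_k v 0 k * (Q^-1 * G (evI k)) = 0.
    under eq_bigr do rewrite mulrCA.
    rewrite -mulr_sumr; move: vc; rewrite dotE => vc.
    rewrite (_ : \sum_k v 0 k * G (evI k) = 0) ?mulr0 //.
    rewrite -[X in _ = X]vc; apply: eq_bigr => k _; by rewrite mxE.
  rewrite mul0r subr0 mulr_sumr; apply: eq_bigr => l _.
  rewrite mulrA mulr_sumr; congr (_ * _); apply: eq_bigr => k _.
  by rewrite mulrCA.
have := hn V; rewrite key pmulr_rle0 // invr_gt0 //.
Qed.
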